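(* Let $N\ge2$ and let $a_i=(\alpha_i,N)$, $i=1,\dots,m$, be transpositions in $S_N$ with $1\le\alpha_i\le N-1$, such that the partition $\pi$ of $\{1,\dots,m\}$ defined by $j\sim k\iff a_j=a_k$ belongs to $NC_{1,2}(m)$. Let $i_1<\dots<i_k$ be the elements of those one-element blocks of $\pi$ that are not inner blocks of any two-element block. Then the cycle decomposition of $\sigma=a_1\cdots a_m$ is as follows: (i) if $k\ge1$, $\sigma$ has the cycle $(N,\alpha_{i_k},\alpha_{i_{k-1}},\dots,\alpha_{i_1})$; if $k=0$, $N$ is a fixed point of $\sigma$; (ii) for every two-element block $\{p,r\}$ of $\pi$ having at least one direct inner one-element block, with the direct inner one-element blocks being $\{j_1\},\dots,\{j_l\}$, $j_1<\dots<j_l$, $\sigma$ has the cycle $(\alpha_r,\alpha_{j_l},\dots,\alpha_{j_1})$ (here $\alpha_r=\alpha_p$); (iii) these are all the nontrivial cycles of $\sigma$; all other points are fixed.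
   Context: Products of permutations are compositions, rightmost factor acting first; a cycle $(x_1,x_2,\dots,x_t)$ maps $x_1\mapsto x_2\mapsto\dots\mapsto x_t\mapsto x_1$. $NC_{1,2}(m)$ is the set of non-crossing partitions of $\{1,\dots,m\}$ all of whose blocks have one or two elements (non-crossing: no $k_1<l_1<k_2<l_2$ with $k_1,k_2$ in one block and $l_1,l_2$ in another). A block $B$ is an inner block of a block $B'$ if $B'$ contains an element smaller than all elements of $B$ and an element larger than all elements of $B$. $B$ is a direct inner block of $B''$ if $B$ is an inner block of $B''$ and there is no block $B'$ such that $B$ is an inner block of $B'$ and $B'$ is an inner block of $B''$. *)

(* Defs.v *)
(* Points of S_N are the naturals 1..N; permutations are
   represented as functions nat -> nat (fixing everything outside 1..N). *)
From mathcomp Require Import all_boot.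
Set Implicit Arguments. Unset Strict Implicit. Unset Printing Implicit Defensive.

Definition transp (a b x : nat) : nat :=
  if x == a then b else if x == b then a else x.

(* sigma = a_1 a_2 ... a_m with a_i = (alpha i, N); rightmost factor acts first:
   sigma x = a_1 (a_2 (... (a_m x))) *)
Definition sigma (N m : nat) (alpha : nat -> nat) (x : nat) : nat :=
  foldr (fun i y => transp (alpha i) N y) x (iota 1 m).

Definition block_of (m : nat) (alpha : nat -> nat) (j : nat) : seq nat :=
  [seq k <- iota 1 m | alpha k == alpha j].

Definition blocks (m : nat) (alpha : nat -> nat) : seq (seq nat) :=
  undup [seq block_of m alpha j | j <- iota 1 m].

Definition NC12 (bl : seq (seq nat)) : Prop :=
  (forall B, B \in bl -> size B = 1 \/ size B = 2) /\
  (forall B B', B \in bl -> B' \in bl -> B <> B' ->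
     ~ exists k1 l1 k2 l2, [/\ k1 < l1, l1 < k2, k2 < l2,
                             (k1 \in B) && (k2 \in B) & (l1 \in B') && (l2 \in B')]).

Definition inner (B B' : seq nat) : bool :=
  has (fun x => all (fun y => x < y) B) B' && has (fun x => all (fun y => y < x) B) B'.

Definition direct_inner (bl : seq (seq nat)) (B B'' : seq nat) : bool :=
  inner B B'' && ~~ has (fun B' => inner B B' && inner B' B'') bl.

Definition outer_singletons (m : nat) (alpha : nat -> nat) : seq nat :=
  [seq j <- iota 1 m | ([:: j] \in blocks m alpha) &&
     ~~ has (fun B => (size B == 2) && inner [:: j] B) (blocks m alpha)].

Definition direct_inner_singletons (m : nat) (alpha : nat -> nat) (B : seq nat)
  : seq nat :=
  [seq j <- iota 1 m | ([:: j] \in blocks m alpha) &&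
     direct_inner (blocks m alpha) [:: j] B].

Definition has_cycle (f : nat -> nat) (c : seq nat) : bool :=
  (c != [::]) && uniq c && fcycle f c.

(* Main.v *)
Require Import Defs.
From mathcomp Require Import all_boot zify.
Set Implicit Arguments. Unset Strict Implicit. Unset Printing Implicit Defensive.

Lemma sigma0 N alpha x : sigma N 0 alpha x = x.
Proof. by []. Qed.

Lemma sigmaS N m alpha x :
  sigma N m.+1 alpha x = sigma N m alpha (transp (alpha m.+1) N x).
Proof.
rewrite /sigma.
have -> : iota 1 m.+1 = iota 1 m ++ [:: m.+1] by rewrite -[m.+1]addn1 iotaD [1 + m]addnC.
by rewrite foldr_cat.
Qed.

Lemma sigma_fix N m alpha x : x != N -> (forall i, 0 < i <= m -> alpha i != x) ->
  sigma N m alpha x = x.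
Proof.
move=> hxN; elim: m => [|m IH] h //.
rewrite sigmaS /transp.
have -> : (x == alpha m.+1) = false.
  by apply/negbTE; rewrite eq_sym; apply: h; lia.
rewrite (negbTE hxN); apply: IH => i hi; apply: h; lia.
Qed.

Lemma path_rcons_eq (f g : nat -> nat) x y s z : f x = g y -> {in s, f =1 g} ->
  fpath f x (rcons s z) = fpath g y (rcons s z).
Proof.
elim: s x y => [|w s IH] x y hxy hs /=; first by rewrite hxy.
rewrite hxy; congr (_ && _); apply: IH; first by apply: hs; rewrite inE eqxx.
by move=> v hv; apply: hs; rewrite inE hv orbT.
Qed.

Lemma filter_iota_split (P : pred nat) lo len p : lo <= p < lo + len -> P p ->
  filter P (iota lo len) =
  filter (fun j => P j && (j < p)) (iota lo len) ++ p :: filter (fun j => P j && (p < j)) (iota lo len).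
Proof.
elim: len lo => [|len IH] lo hp hP; first lia.
rewrite /= .
have [elo|nlo] := eqVneq lo p.
  subst lo; rewrite hP ltnn /= .
  have -> : filter (fun j => P j && (j < p)) (iota p.+1 len) = [::].
    rewrite -(filter_pred0 (iota p.+1 len)); apply: eq_in_filter.
    move=> j; rewrite mem_iota => hj /=; apply/negbTE/negP => /andP[_]; lia.
  congr (_ :: _); apply: eq_in_filter => j; rewrite mem_iota => hj.
  have -> : p < j by lia. by rewrite andbT.
have hlo : lo < p by lia.
rewrite hlo andbT.
have -> : p < lo = false by lia.
rewrite andbF (IH lo.+1) //; last by lia.
by case: (P lo).
Qed.

Definition sg (alpha : nat -> nat) M j :=
  (0 < j <= M) && all (fun k => (alpha k == alpha j) ==> (k == j)) (iota 1 M).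
Definition cov (alpha : nat -> nat) M j :=
  has (fun q => has (fun s => (q < j < s) && (alpha q == alpha s)) (iota 1 M)) (iota 1 M).
Definition cov2 (alpha : nat -> nat) M p r j :=
  has (fun q => has (fun s => [&& q < j < s, alpha q == alpha s, p < q & s < r])
    (iota 1 M)) (iota 1 M).
Definition H1 (alpha : nat -> nat) M := forall i j k, 0 < i <= M -> 0 < j <= M -> 0 < k <= M ->
  alpha i = alpha j -> alpha j = alpha k -> [\/ i = j, j = k | i = k].
Definition H2 (alpha : nat -> nat) M := forall k1 l1 k2 l2, 0 < k1 -> k1 < l1 -> l1 < k2 ->
  k2 < l2 -> l2 <= M -> alpha k1 = alpha k2 -> alpha l1 = alpha l2 -> alpha k1 = alpha l1.

Lemma mem_iota1 M k : (k \in iota 1 M) = (0 < k <= M).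
Proof. rewrite mem_iota; lia. Qed.

Lemma sgP alpha M j : reflect (0 < j <= M /\ forall k, 0 < k <= M -> alpha k = alpha j -> k = j)
  (sg alpha M j).
Proof.
apply: (iffP andP) => [[hj /allP h]|[hj h]]; split => //.
- move=> k hk ha; have := h k; rewrite mem_iota1 hk ha eqxx /= => /(_ isT) /eqP //.
- apply/allP => k; rewrite mem_iota1 => hk; apply/implyP => /eqP ha; apply/eqP; exact: h.
Qed.

Lemma covP alpha M j : reflect (exists q s, [/\ 0 < q, q < j, j < s, s <= M & alpha q = alpha s])
  (cov alpha M j).
Proof.
apply: (iffP hasP) => [[q]|[q [s [h1 h2 h3 h4 h5]]]].
- rewrite mem_iota1 => hq /hasP[s]; rewrite mem_iota1 => hs /andP[hqs /eqP ha].
  exists q, s; split => //; lia.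
- exists q; first by rewrite mem_iota1; lia.
  apply/hasP; exists s; first by rewrite mem_iota1; lia.
  rewrite h5 eqxx andbT; lia.
Qed.

Lemma cov2P alpha M p r j : reflect
  (exists q s, [/\ 0 < q, q < j, j < s, s <= M & [/\ alpha q = alpha s, p < q & s < r]])
  (cov2 alpha M p r j).
Proof.
apply: (iffP hasP) => [[q]|[q [s [h1 h2 h3 h4 [h5 h6 h7]]]]].
- rewrite mem_iota1 => hq /hasP[s]; rewrite mem_iota1 => hs /= /andP[hqs /andP[/eqP ha /andP[h6 h7]]].
  exists q, s; split => //; lia.
- exists q; first by rewrite mem_iota1; lia.
  apply/hasP; exists s; first by rewrite mem_iota1; lia.
  rewrite h5 eqxx /=; lia.
Qed.

Lemma mem_block M alpha j k : (k \in block_of M alpha j) = (0 < k <= M) && (alpha k == alpha j).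
Proof. by rewrite /block_of mem_filter mem_iota1 andbC. Qed.

Lemma block_sorted M alpha j : sorted ltn (block_of M alpha j).
Proof. rewrite /block_of; apply: sorted_filter; [exact: ltn_trans | exact: iota_ltn_sorted]. Qed.

Lemma in_blocks M alpha B :
  B \in blocks M alpha <-> exists2 j, 0 < j <= M & B = block_of M alpha j.
Proof.
rewrite /blocks mem_undup; split.
- by case/mapP => j; rewrite mem_iota1 => hj ->; exists j.
- by case=> j hj ->; apply: map_f; rewrite mem_iota1.
Qed.

Lemma sing_blocks M alpha j : ([:: j] \in blocks M alpha) = sg alpha M j.
Proof.
apply/idP/sgP.
- case/in_blocks => i hi hB.
  have : j \in block_of M alpha i by rewrite -hB inE.
  rewrite mem_block => /andP[hj /eqP hji]; split => // k hk hkj.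
  have : k \in block_of M alpha i by rewrite mem_block hk hkj hji eqxx.
  by rewrite -hB inE => /eqP.
- case=> hj h; apply/in_blocks; exists j => //.
  apply: (irr_sorted_eq ltn_trans ltnn) => //; first by apply: block_sorted.
  move=> k; rewrite inE mem_block; apply/eqP/andP => [->|[hk /eqP ha]].
  + by split.
  + exact: h.
Qed.

Lemma pair_blocks M alpha B : B \in blocks M alpha -> size B = 2 ->
  exists q s, B = [:: q; s] /\ [/\ 0 < q, q < s, s <= M & alpha q = alpha s].
Proof.
case/in_blocks => i hi hB.
case: B hB => [|q [|s [|? ?]]] //= hB _.
have hs := block_sorted M alpha i; rewrite -hB /= andbT in hs.
have : q \in block_of M alpha i by rewrite -hB inE eqxx.
have : s \in block_of M alpha i by rewrite -hB !inE eqxx orbT.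
rewrite !mem_block => /andP[h1 /eqP h2] /andP[h3 /eqP h4].
exists q, s; split => //; split => //; [lia | lia | by rewrite h2 h4].
Qed.

Lemma pair_in M alpha q s : H1 alpha M -> 0 < q -> q < s -> s <= M -> alpha q = alpha s ->
  block_of M alpha q = [:: q; s] /\ [:: q; s] \in blocks M alpha.
Proof.
move=> h1 hq hqs hs ha.
have e : block_of M alpha q = [:: q; s].
  apply: (irr_sorted_eq ltn_trans ltnn); [exact: block_sorted | by rewrite /= hqs |].
  move=> k; rewrite mem_block !inE; apply/andP/idP => [[hk /eqP hka]|].
  + have hq' : 0 < q <= M by lia.
    have hs' : 0 < s <= M by lia.
    case: (h1 k q s hk hq' hs' hka ha) => [->|e|->]; rewrite ?eqxx ?orbT //; lia.
  + case/orP => /eqP ->; split; rewrite ?ha ?eqxx //; lia.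
split => //; apply/in_blocks; exists q => //; lia.
Qed.

Lemma inner_sp j p r : p < r -> inner [:: j] [:: p; r] = (p < j < r).
Proof. move=> h; rewrite /inner /=; apply/idP/idP; lia. Qed.

Lemma outer_eq M alpha : H1 alpha M ->
  outer_singletons M alpha = filter (fun j => sg alpha M j && ~~ cov alpha M j) (iota 1 M).
Proof.
move=> h1; apply: eq_in_filter => j _; rewrite sing_blocks; congr (_ && ~~ _).
apply/hasP/covP.
- case=> B hB /andP[/eqP hs hin].
  have [q [s [eB [hq hqs hsM ha]]]] := pair_blocks hB hs.
  subst B; rewrite inner_sp // in hin; exists q, s; split => //; lia.
- case=> q [s [hq hqj hjs hsM ha]].
  have [_ hB] := pair_in h1 hq (ltn_trans hqj hjs) hsM ha.
  exists [:: q; s] => //; rewrite /= inner_sp; lia.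
Qed.

Lemma dis_eq M alpha p r : H1 alpha M -> 0 < p -> p < r -> r <= M -> alpha p = alpha r ->
  direct_inner_singletons M alpha [:: p; r] =
  filter (fun j => sg alpha M j && (p < j < r) && ~~ cov2 alpha M p r j) (iota 1 M).
Proof.
move=> h1 hp hpr hrM har; apply: eq_in_filter => j _.
rewrite sing_blocks /direct_inner inner_sp // !andbA; congr (_ && ~~ _).
apply/hasP/cov2P.
- case=> B' hB' /andP[hjB hBpr]; case/in_blocks: hB' => i hi eB; subst B'.
  case/andP: hjB => /hasP [x hx /= hxj] /hasP [y hy /= hyj].
  case/andP: hBpr => /hasP [z hz /allP hzx] /hasP [w hw /allP hwy].
  have := hzx x hx; have := hwy y hy.
  move: hx hy; rewrite !mem_block => /andP[hxM /eqP hxa] /andP[hyM /eqP hya].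
  move: hz hw; rewrite !inE => hz hw h2 h3.
  exists x, y; split; try lia; split; first by rewrite hxa hya.
  + case/orP: hz => /eqP hz; lia.
  + case/orP: hw => /eqP hw; lia.
- case=> q [s [hq hqj hjs hsM [ha hpq hsr]]].
  have [_ hB] := pair_in h1 hq (ltn_trans hqj hjs) hsM ha.
  exists [:: q; s] => //; rewrite inner_sp; last lia.
  rewrite /inner /=; apply/and3P; split; try lia.
Qed.

Lemma iota1S m : iota 1 m.+1 = iota 1 m ++ [:: m.+1].
Proof. by rewrite -[m.+1]addn1 iotaD [1 + m]addnC. Qed.

Lemma sg_old alpha m j : 0 < j <= m ->
  sg alpha m.+1 j = sg alpha m j && (alpha j != alpha m.+1).
Proof.
move=> hj; apply/sgP/andP => [[_ h]|[/sgP [_ h] /eqP hne]].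
- split.
  + apply/sgP; split => // k hk; apply: h; lia.
  + apply/eqP => e; have := h m.+1 _ (esym e); lia.
- split; first lia.
  move=> k hk hka; have [hkm|hkn] : k <= m \/ k = m.+1 by lia.
  + apply: h => //; lia.
  + by subst k; case: hne.
Qed.

Lemma cov2_old alpha m q s j : s <= m.+1 -> cov2 alpha m.+1 q s j = cov2 alpha m q s j.
Proof.
move=> hs; apply/cov2P/cov2P => [[x [y [h1 h2 h3 h4 [h5 h6 h7]]]]|[x [y [h1 h2 h3 h4 [h5 h6 h7]]]]];
  exists x, y; split => //; lia.
Qed.

Lemma three_contra alpha M i j k : H1 alpha M -> 0 < i -> i < j -> j < k -> k <= M ->
  alpha i = alpha j -> alpha j = alpha k -> False.
Proof.
move=> h1 hi hij hjk hk e1 e2.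
have := h1 i j k; case; try lia; move=> e; lia.
Qed.

Lemma H1_down alpha m : H1 alpha m.+1 -> H1 alpha m.
Proof. move=> h i j k hi hj hk; apply: h; lia. Qed.

Lemma H2_down alpha m : H2 alpha m.+1 -> H2 alpha m.
Proof. move=> h k1 l1 k2 l2 ? ? ? ? ?; apply: h => //; lia. Qed.

Lemma O_single alpha m : H1 alpha m.+1 -> (forall k, 0 < k <= m -> alpha k != alpha m.+1) ->
  outer_singletons m.+1 alpha = rcons (outer_singletons m alpha) m.+1.
Proof.
move=> h1 hS; rewrite (outer_eq (H1_down h1)) (outer_eq h1) iota1S filter_cat -cats1.
congr (_ ++ _).
- apply: eq_in_filter => j; rewrite mem_iota1 => hj.
  rewrite sg_old // hS // andbT; congr (_ && ~~ _).
  apply/covP/covP => [[q [s [h1' h2 h3 h4 h5]]]|[q [s [h1' h2 h3 h4 h5]]]].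
  + have [hsm|hsn] : s <= m \/ s = m.+1 by lia.
    * by exists q, s; split.
    * subst s; have := hS q; rewrite h5 eqxx; move=> /(_ _)/idP; lia.
  + exists q, s; split => //; lia.
- rewrite /=.
  have -> : sg alpha m.+1 m.+1.
    apply/sgP; split; first lia; move=> k hk hka.
    have [hkm|] : k <= m \/ k = m.+1 by lia. 2: by [].
    have := hS k; rewrite hka eqxx; move=> /(_ _)/idP; lia.
  have -> : cov alpha m.+1 m.+1 = false.
    apply/negbTE/covP => [[q [s [? ? ? ? ?]]]]; lia.
  by [].
Qed.

Lemma D_old alpha m q s : H1 alpha m.+1 -> H2 alpha m.+1 -> 0 < q -> q < s -> s <= m ->
  alpha q = alpha s ->
  direct_inner_singletons m.+1 alpha [:: q; s] = direct_inner_singletons m alpha [:: q; s].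
Proof.
move=> h1 h2 hq hqs hs ha.
rewrite (dis_eq (H1_down h1) hq hqs hs ha) (dis_eq h1 hq hqs _ ha); last lia.
rewrite iota1S filter_cat /=.
have -> : m.+1 < s = false by lia.
rewrite !andbF /= cats0.
apply: eq_in_filter => j; rewrite mem_iota1 => hj.
rewrite sg_old // cov2_old; last lia.
case hsg: (sg alpha m j) => //=.
case hr: (q < j < s) => //=.
have -> : alpha j != alpha m.+1.
  apply/eqP => e.
  have e2 : alpha q = alpha j by apply: (h2 q j s m.+1) => //; lia.
  case/sgP: hsg => _ hh; have := hh q _ e2; lia.
  by []. by rewrite andbF.
Qed.

Lemma O_pair alpha m p : H1 alpha m.+1 -> H2 alpha m.+1 -> 0 < p <= m ->
  alpha p = alpha m.+1 ->
  outer_singletons m alpha =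
  outer_singletons m.+1 alpha ++ p :: direct_inner_singletons m.+1 alpha [:: p; m.+1].
Proof.
move=> h1 h2 hp hpn.
have h1m := H1_down h1.
have sgp : sg alpha m p.
  apply/sgP; split => // k hk hka.
  case: (ltngtP k p) => // hkp.
  + exfalso; apply: (three_contra h1 (i:=k) (j:=p) (k:=m.+1)); try lia; by [].
  + exfalso; apply: (three_contra h1 (i:=p) (j:=k) (k:=m.+1)); try lia; by rewrite hka.
have covp : cov alpha m p = false.
  apply/negbTE/covP => [[q [s [? ? ? ? e]]]].
  have e2 : alpha q = alpha p by apply: (h2 q p s m.+1) => //; lia.
  apply: (three_contra h1 (i:=q) (j:=p) (k:=m.+1)); try lia; by [].
have hpr : (0 < p < m.+1) by lia.
rewrite (outer_eq h1m) (outer_eq h1) (@dis_eq m.+1 alpha p m.+1 h1 _ _ (leqnn _) hpn); try lia.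
rewrite (filter_iota_split (p:=p)); [|lia|by rewrite sgp covp].
rewrite !iota1S !filter_cat /=.
have -> : sg alpha m.+1 m.+1 = false.
  apply/negbTE/sgP => [[_ h]]; have := h p _ hpn; lia.
rewrite /= !cats0.
have sgE : forall j, 0 < j <= m -> sg alpha m j ->
    sg alpha m.+1 j = (j != p).
  move=> j hj hsg; rewrite sg_old // hsg /= -hpn.
  case/sgP: hsg => _ hh.
  apply/idP/idP => [|/eqP hne]; first by apply: contra => /eqP ->.
  by apply/eqP => e; apply: hne; symmetry; apply: hh; [lia | rewrite e].
congr (_ ++ _ :: _); apply: eq_in_filter => j; rewrite mem_iota1 => hj.
- case hsg: (sg alpha m j); last by rewrite (sg_old _ hj) hsg.
  rewrite sgE //=.
  have -> : cov alpha m.+1 j = cov alpha m j || (p < j).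
    apply/covP/orP => [[q [s [? ? ? ? e]]]|].
    + have [hsm|hsn] : s <= m \/ s = m.+1 by lia.
      * by left; apply/covP; exists q, s; split.
      * subst s; right.
        case: (ltngtP q p) => hqp; try lia.
        -- exfalso; apply: (three_contra h1 (i:=q) (j:=p) (k:=m.+1)); try lia; by rewrite hpn.
    + case=> [/covP [q [s [? ? ? ? e]]]|hpj].
      * exists q, s; split => //; lia.
      * exists p, m.+1; split => //; lia.
  apply/idP/idP; lia.
- case hsg: (sg alpha m j); last by rewrite (sg_old _ hj) hsg.
  rewrite sgE //=.
  case hpj: (p < j); last by case: (j != p); rewrite /= ?andbF.
  have -> : j != p by lia.
  have -> : j < m.+1 by lia.
  rewrite /= andbT; congr (~~ _).
  apply/covP/cov2P => [[q [s [? ? ? ? e]]]|[q [s [? ? ? ? [e ? ?]]]]].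
    have hpq : p < q.
      case: (ltngtP q p) => hqp //.
      * exfalso.
        have e2 : alpha q = alpha p by apply: (h2 q p s m.+1) => //; lia.
        apply: (three_contra h1 (i:=q) (j:=p) (k:=m.+1)); try lia; by [].
      * exfalso; subst q.
        apply: (three_contra h1 (i:=p) (j:=s) (k:=m.+1)); try lia; by rewrite -e.
    exists q, s; split => //; try lia; split => //; lia.
  + exists q, s; split => //; lia.
Qed.

Definition Inv N m alpha : Prop :=
  let s := sigma N m alpha in
  let I := outer_singletons m alpha in
  (if I != [::] then fcycle s (N :: rev (map alpha I)) else s N == N) /\
  (forall B, B \in blocks m alpha -> size B = 2 ->
     let J := direct_inner_singletons m alpha B in
     J != [::] -> fcycle s (alpha (last 0 B) :: rev (map alpha J))) /\
  (forall x, 1 <= x <= N -> s x != x ->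
     (I != [::] /\ x \in N :: rev (map alpha I)) \/
     (exists2 B, B \in blocks m alpha &
        [/\ size B = 2, direct_inner_singletons m alpha B != [::] &
            x \in alpha (last 0 B) :: rev (map alpha (direct_inner_singletons m alpha B))])).

Lemma mem_outer_sg M alpha j : j \in outer_singletons M alpha -> sg alpha M j.
Proof. by rewrite mem_filter -sing_blocks => /andP[/andP[]]. Qed.

Lemma mem_dis_sg M alpha B j : j \in direct_inner_singletons M alpha B -> sg alpha M j.
Proof. by rewrite mem_filter -sing_blocks => /andP[/andP[]]. Qed.

Lemma mem_rev_map (alpha : nat -> nat) L w : w \in rev (map alpha L) ->
  exists2 j, j \in L & w = alpha j.
Proof. by rewrite mem_rev => /mapP. Qed.

Lemma fcycle_transfer (f g : nat -> nat) c : {in c, f =1 g} -> fcycle g c -> fcycle f c.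
Proof.
case: c => [//|x s] h /=.
rewrite (@path_rcons_eq f g x x) //; first by apply: h; rewrite inE eqxx.
by move=> w hw; apply: h; rewrite inE hw orbT.
Qed.

Lemma le_up j m : 0 < j <= m -> 0 < j <= m.+1.
Proof. lia. Qed.

Lemma main_ind N alpha : 2 <= N -> forall m,
  (forall i, 1 <= i <= m -> 1 <= alpha i <= N - 1) -> H1 alpha m -> H2 alpha m ->
  Inv N m alpha.
Proof.
move=> hN; elim=> [|m IH] hb h1 h2.
  split; first by rewrite /= eqxx.
  split; first by [].
  by move=> x _; rewrite sigma0 eqxx.
have [Ig [IIg IIIg]] := IH (fun i hi => hb i ltac:(lia)) (H1_down h1) (H2_down h2).
set g := sigma N m alpha in Ig IIg IIIg.
set f := sigma N m.+1 alpha.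
set a := alpha m.+1.
rewrite /Inv; fold f.
have ha := hb m.+1 ltac:(lia).
have aN : a != N by apply/eqP => e; change (alpha m.+1 = N) in e; rewrite e in ha; lia.
have fN : f N = g a by rewrite /f sigmaS /transp eq_sym (negbTE aN) eqxx.
have fa : f a = g N by rewrite /f sigmaS /transp eqxx.
have fo : forall x, x != a -> x != N -> f x = g x.
  by move=> x hxa hxN; rewrite /f sigmaS /transp (negbTE hxa) (negbTE hxN).
have alN : forall j, 0 < j <= m.+1 -> alpha j != N.
  by move=> j hj; apply/eqP => e; have := hb j ltac:(lia); rewrite e; lia.
have oldpair : forall B, B \in blocks m alpha -> size B = 2 ->
    exists q s, [/\ B = [:: q; s], 0 < q, q < s, s <= m & alpha q = alpha s].
  move=> B hB hs; have [q [s [-> [? ? ? ?]]]] := pair_blocks hB hs.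
  by exists q, s.
case: (boolP (has (fun k => alpha k == a) (iota 1 m))) => [/hasP [p] | hS].
-
  rewrite mem_iota1 => hp /eqP hpa.
  have hO := O_pair h1 h2 hp hpa.
  have hOm : outer_singletons m alpha != [::] by rewrite hO -size_eq0 size_cat addnS.
  rewrite hOm /= hO map_cat rev_cat /= rev_cons in Ig.
  set X := rev (map alpha (direct_inner_singletons m.+1 alpha [:: p; m.+1])) in Ig.
  set Y := rev (map alpha (outer_singletons m.+1 alpha)) in Ig.
  have sgne : forall j, sg alpha m.+1 j -> alpha j != a /\ alpha j != N.
    move=> j /sgP [hj hh]; split; last by apply: alN.
    apply/eqP => e.
    have e1 := hh p ltac:(lia) (etrans hpa (esym e)).
    have e2 := hh m.+1 ltac:(lia) (esym e).
    lia.
  have hY : {in Y, f =1 g}.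
    move=> w /mem_rev_map [j /mem_outer_sg /sgne [h3 h4] ->]; exact: fo.
  have hX : {in X, f =1 g}.
    move=> w /mem_rev_map [j /mem_dis_sg /sgne [h3 h4] ->]; exact: fo.
  move: Ig; rewrite rcons_cat cat_path rcons_path last_rcons hpa => /andP [/andP [pX lX] pY].
  have pairn : [:: p; m.+1] \in blocks m.+1 alpha.
    by have [] := pair_in h1 (q:=p) (s:=m.+1) ltac:(lia) ltac:(lia) (leqnn _) hpa.
  have newD : (direct_inner_singletons m.+1 alpha [:: p; m.+1]) != [::] -> fcycle f (alpha (last 0 [:: p; m.+1]) :: rev (map alpha (direct_inner_singletons m.+1 alpha [:: p; m.+1]))).
    move=> _; rewrite /= -/a -/X.
    rewrite (@path_rcons_eq f g a N) //.
    by rewrite rcons_path pX.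
  split; [|split].
  + case: ifP => hOn.
    * rewrite /= -/Y (@path_rcons_eq f g N a) //.
    * move: hOn => /negbFE /eqP hOn.
      move: pY; rewrite /Y hOn /= => /andP [/eqP e _]; apply/eqP; exact: (etrans fN e).
  + move=> B hB hs hJ.
    have [q [s [eB [hq hqs hsn hqsa]]]] := pair_blocks hB hs.
    subst B.
    case: (leqP s m) => [hsm|hsm'].
    * have [_ hBm] := pair_in (H1_down h1) hq hqs hsm hqsa.
      rewrite (D_old h1 h2 hq hqs hsm hqsa) in hJ *.
      have := IIg _ hBm erefl hJ.
      apply: fcycle_transfer => w; rewrite inE => /orP [/eqP ->|].
      -- rewrite /=; apply: fo.
         ++ apply/eqP => e.
            have hsm1 : s < m.+1 by rewrite ltnS.
            exact: (three_contra h1 hq hqs hsm1 (leqnn _) hqsa e).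
         ++ by apply: alN; rewrite (ltn_trans hq hqs) (leq_trans hsm (leqnSn _)).
      -- move=> /mem_rev_map [j hj ->].
         rewrite -(D_old h1 h2 hq hqs hsm hqsa) in hj.
         by have [h3 h4] := sgne _ (mem_dis_sg hj); apply: fo.
    * have hsn' : s = m.+1 by apply/eqP; rewrite eqn_leq hsn hsm'.
      subst s.
      have eqp : q = p.
        have hpm : p < m.+1 by case/andP: hp => _ ?; rewrite ltnS.
        have hp0 : 0 < p by case/andP: hp.
        case: (ltngtP q p) => hqp //; exfalso.
        -- exact: (three_contra h1 hq hqp hpm (leqnn _) (etrans hqsa (esym hpa)) hpa).
        -- exact: (three_contra h1 hp0 hqp hqs (leqnn _) (etrans hpa (esym hqsa)) hqsa).
      subst q; exact: newD.
  + move=> x hx hfx; fold f in hfx.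
    have [exa|nxa] := eqVneq x a.
    * subst x; right; exists [:: p; m.+1] => //; split => //.
      -- apply/negP => /eqP hD; move: lX hfx; rewrite /X hD /= fa => /eqP -> .
         by rewrite eqxx.
      -- by rewrite inE eqxx.
    have [exN|nxN] := eqVneq x N.
    * subst x; left; split; last by rewrite inE eqxx.
      apply/negP => /eqP hOn; move: pY hfx; rewrite /Y hOn /= fN => /andP [/eqP -> _].
      by rewrite eqxx.
    rewrite (fo _ nxa nxN) in hfx.
    case: (IIIg x hx hfx) => [[_ hin]|[B hB [hs hJ hin]]].
    * rewrite hO map_cat rev_cat /= rev_cons hpa -cats1 -catA cat1s -/X -/Y in hin.
      rewrite inE (negbTE nxN) /= mem_cat inE (negbTE nxa) /= in hin.
      case/orP: hin => hin.
      -- right; exists [:: p; m.+1] => //; split => //.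
         ++ by apply/negP => /eqP hD; move: hin; rewrite /X hD.
         ++ by rewrite inE hin orbT.
      -- left; split; last by rewrite inE hin orbT.
         by apply/negP => /eqP hD; move: hin; rewrite /Y hD.
    * right; have [q [s [eB hq hqs hsm hqsa]]] := oldpair B hB hs.
      subst B; rewrite -(D_old h1 h2 hq hqs hsm hqsa) in hJ hin.
      exists [:: q; s] => //.
      by have [] := pair_in h1 hq hqs (leq_trans hsm (leqnSn _)) hqsa.
-
  have hS' : forall k, 0 < k <= m -> alpha k != alpha m.+1.
    move=> k hk; apply/negP => /eqP e; move/hasP: hS; apply; exists k.
      by rewrite mem_iota1.
    by rewrite e.
  have hO := O_single h1 hS'.
  have ga : g a = a.
    apply: sigma_fix => // i hi; rewrite /a; exact: hS'.
  have sgne : forall j, 0 < j <= m -> alpha j != a /\ alpha j != N.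
    by move=> j hj; split; [apply: hS' | apply: alN; apply: le_up].
  have hY : {in rev (map alpha (outer_singletons m alpha)), f =1 g}.
    move=> w /mem_rev_map [j /mem_outer_sg /sgP [hj _] ->].
    by have [? ?] := sgne j hj; apply: fo.
  have oldp : forall q s, 0 < q -> q < s -> s <= m.+1 -> alpha q = alpha s -> s <= m.
    move=> q s hq hqs hs e; case: (leqP s m) => // hms.
    have hsn : s = m.+1 by apply/eqP; rewrite eqn_leq hs hms.
    subst s; have hq' : 0 < q <= m by rewrite hq -ltnS.
    by move: (hS' q hq'); rewrite e eqxx.
  split; [|split].
  + rewrite hO; case: (outer_singletons m alpha) Ig hY => [|j0 L] Ig' hY';
      rewrite map_rcons rev_rcons /= fN ga eqxx /=.
    * by move: Ig'; rewrite /= andbT (fa : f (alpha m.+1) = g N).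
    * move: Ig'; rewrite /= => Ig'.
      rewrite (@path_rcons_eq f g (alpha m.+1) N) //.
  + move=> B hB hs hJ.
    have [q [s [eB [hq hqs hsn hqsa]]]] := pair_blocks hB hs.
    subst B; have hsm := oldp q s hq hqs hsn hqsa.
    have [_ hBm] := pair_in (H1_down h1) hq hqs hsm hqsa.
    rewrite (D_old h1 h2 hq hqs hsm hqsa) in hJ *.
    have := IIg _ hBm erefl hJ.
    apply: fcycle_transfer => w; rewrite inE => /orP [/eqP ->|].
    * by have [? ?] := sgne s ltac:(by rewrite (ltn_trans hq hqs) hsm); apply: fo.
    * move=> /mem_rev_map [j /mem_dis_sg /sgP [hj _] ->].
      by have [? ?] := sgne j hj; apply: fo.
  + move=> x hx hfx; fold f in hfx.
    have hOn : outer_singletons m.+1 alpha != [::] by rewrite hO; case: (outer_singletons _ _).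
    have [exa|nxa] := eqVneq x a.
    * by left; split => //; rewrite hO map_rcons rev_rcons exa !inE eqxx orbT.
    have [exN|nxN] := eqVneq x N.
    * by left; split => //; rewrite exN inE eqxx.
    rewrite (fo _ nxa nxN) in hfx.
    case: (IIIg x hx hfx) => [[_ hin]|[B hB [hs hJ hin]]].
    * left; split => //; rewrite hO map_rcons rev_rcons.
      by move: hin; rewrite !inE => /orP [->|->]; rewrite ?orbT.
    * right; have [q [s [eB hq hqs hsm hqsa]]] := oldpair B hB hs.
      subst B; rewrite -(D_old h1 h2 hq hqs hsm hqsa) in hJ hin.
      exists [:: q; s] => //.
      by have [] := pair_in h1 hq hqs (leq_trans hsm (leqnSn _)) hqsa.
Qed.

Lemma uniq_sg_map M alpha (L : seq nat) : uniq L -> {in L, forall j, sg alpha M j} ->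
  uniq (map alpha L).
Proof.
move=> hu hs; rewrite map_inj_in_uniq // => i j hi hj e.
have /sgP [_ hh] := hs j hj; apply: hh => //.
by have /sgP [] := hs i hi.
Qed.

Lemma uniq_C0 N m alpha : (forall i, 1 <= i <= m -> 1 <= alpha i <= N - 1) ->
  uniq (N :: rev (map alpha (outer_singletons m alpha))).
Proof.
move=> hb; rewrite /= rev_uniq; apply/andP; split.
- apply/negP => /mem_rev_map [j /mem_outer_sg /sgP [hj _] e].
  have := hb j hj; rewrite -e; lia.
- apply: (@uniq_sg_map m); first by apply: filter_uniq; apply: iota_uniq.
  by move=> j /mem_outer_sg.
Qed.

Lemma uniq_CB m alpha q s : 0 < q -> q < s -> s <= m -> alpha q = alpha s ->
  uniq (alpha s :: rev (map alpha (direct_inner_singletons m alpha [:: q; s]))).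
Proof.
move=> hq hqs hs e; rewrite /= rev_uniq; apply/andP; split.
- apply/negP => /mem_rev_map [j /mem_dis_sg /sgP [hj hh] e'].
  have e1 := hh s ltac:(lia) e'.
  have e2 := hh q ltac:(lia) (etrans e e').
  lia.
- apply: (@uniq_sg_map m); first by apply: filter_uniq; apply: iota_uniq.
  by move=> j /mem_dis_sg.
Qed.

Lemma NC_H1 m alpha : NC12 (blocks m alpha) -> H1 alpha m.
Proof.
move=> [hsz _] i j k hi hj hk e1 e2.
case: (eqVneq i j) => [->|nij]; first by constructor 1.
case: (eqVneq j k) => [->|njk]; first by constructor 2.
case: (eqVneq i k) => [->|nik]; first by constructor 3.
exfalso.
have hB : block_of m alpha i \in blocks m alpha by apply/in_blocks; exists i.
have : size [:: i; j; k] <= size (block_of m alpha i).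
  apply: uniq_leq_size; first by rewrite /= !inE negb_or nij nik njk.
  move=> x; rewrite !inE mem_block => /or3P [] /eqP ->.
  + by rewrite hi eqxx.
  + by rewrite hj e1 eqxx.
  + by rewrite hk -e2 e1 eqxx.
case: (hsz _ hB) => ->; by [].
Qed.

Lemma NC_H2 m alpha : NC12 (blocks m alpha) -> H2 alpha m.
Proof.
move=> [_ hnc] k1 l1 k2 l2 h0 h1 h2 h3 h4 e1 e2.
case: (eqVneq (alpha k1) (alpha l1)) => // ne; exfalso.
have hB : block_of m alpha k1 \in blocks m alpha by apply/in_blocks; exists k1 => //; lia.
have hB' : block_of m alpha l1 \in blocks m alpha by apply/in_blocks; exists l1 => //; lia.
apply: (hnc _ _ hB hB').
- move=> eB.
  have : k1 \in block_of m alpha k1 by rewrite mem_block eqxx andbT; lia.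
  by rewrite eB mem_block (negbTE ne) andbF.
- exists k1, l1, k2, l2; split => //.
  + rewrite !mem_block e1 eqxx !andbT; lia.
  + rewrite !mem_block e2 eqxx !andbT; lia.
Qed.

Unset Implicit Arguments.

Theorem lemma6 (N m : nat) (alpha : nat -> nat)
  (hN : 2 <= N)
  (halpha : forall i, 1 <= i <= m -> 1 <= alpha i <= N - 1)
  (hpi : NC12 (blocks m alpha)) :
  let s := sigma N m alpha in
  let I := outer_singletons m alpha in
  (* (i) *)
  (if I != [::] then has_cycle s (N :: rev (map alpha I)) else s N == N) /\
  (* (ii) *)
  (forall B, B \in blocks m alpha -> size B = 2 ->
     let J := direct_inner_singletons m alpha B in
     J != [::] -> has_cycle s (alpha (last 0 B) :: rev (map alpha J))) /\
  (* (iii) *)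
  (forall x, 1 <= x <= N -> s x != x ->
     (I != [::] /\ x \in N :: rev (map alpha I)) \/
     (exists2 B, B \in blocks m alpha &
        [/\ size B = 2, direct_inner_singletons m alpha B != [::] &
            x \in alpha (last 0 B) :: rev (map alpha (direct_inner_singletons m alpha B))])).
Proof.
have [Ii [IIi IIIi]] := main_ind hN halpha (NC_H1 hpi) (NC_H2 hpi).
split; [|split].
- move: Ii; case: ifP => // _ Ii.
  by rewrite /has_cycle Ii (uniq_C0 halpha).
- move=> B hB hs J hJ.
  have [q [s [eB [hq hqs hsm e]]]] := pair_blocks hB hs.
  subst B; rewrite /has_cycle IIi // andbT /=; exact: uniq_CB.
- exact: IIIi.
Qed.
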